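(* Let $\mathcal{G}=(\mathcal{V},\mathcal{E})$ be a DAG with treatment $A$ and outcome $Y$ satisfying the assumptions of the context, and let $K\subseteq\mathcal{V}\setminus\{A,Y\}$. Then there exists $Z\subseteq\mathcal{V}\setminus\{A,Y\}$ such that $K\cup Z$ is a $K$-irreducible adjustment set for estimating the average treatment effect $\tau$ of $A$ on $Y$. Moreover, every variable $Z_i\in Z$ is an extended confounding variable.
   Context: $\mathcal{G}=(\mathcal{V},\mathcal{E})$ is a DAG containing treatment $A$ and outcome $Y$ with an edge $A\to Y$, with variables following a linear Gaussian SEM Markov and faithful to $\mathcal{G}$, and no variable of $\mathcal{V}\setminus\{A,Y\}$ a descendant of $A$. $\mathcal{G}'$ is $\mathcal{G}$ with the edge $A\to Y$ removed. A set $Z\subseteq\mathcal{V}\setminus\{A,Y\}$ is a valid adjustment set if the OLS estimator of the coefficient of $A$ in the regression of $Y$ on $A$ and $Z$ is unbiased for $\tau$ for every distribution Markov to $\mathcal{G}$; under these assumptions this is equivalent to $A$ and $Y$ being d-separated given $Z$ in $\mathcal{G}'$. For $K\subseteq Z$, a valid adjustment set $Z$ is $K$-irreducible if there is no proper subset $Z'\subsetneq Z$ with $K\subseteq Z'$ that is a valid adjustment set. A variable $V\in\mathcal{V}\setminus\{A,Y\}$ is an extended confounding variable if in $\mathcal{G}'$ it is d-connected to $A$ given some $K\subseteq\mathcal{V}\setminus\{A,Y\}$ and d-connected to $Y$ given some $L\subseteq\mathcal{V}\setminus\{A,Y\}$. *)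

(* Defs.v *)
From mathcomp Require Import all_boot.
Set Implicit Arguments. Unset Strict Implicit. Unset Printing Implicit Defensive.

Section Graphs.
Variable V : finType.
Implicit Types (e : rel V) (Z K : {set V}).

(* e u v means the directed edge u -> v. *)
Definition acyclic e : Prop := forall u v, e u v -> ~~ connect e v u.

Definition adj e : rel V := fun u v => e u v || e v u.

(* A collider (u -> w <- v) is open given Z iff w has a descendant in Z
   (including w itself); a non-collider is open iff w is not in Z. *)
Definition open_at e Z (u w v : V) : bool :=
  if e u w && e v w then [exists z in Z, connect e w z] else w \notin Z.

Fixpoint active_triples e Z (u w : V) (s : seq V) : bool :=
  match s with
  | [::] => true
  | v :: s' => open_at e Z u w v && active_triples e Z w v s'
  end.

Definition active e Z (x : V) (s : seq V) : bool :=
  match s with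
  | [::] => true
  | w :: s' => active_triples e Z x w s'
  end.

Definition dconnected e Z (x y : V) : Prop :=
  x \notin Z /\ y \notin Z /\
  exists s : seq V,
    [/\ path (adj e) x s, last x s = y, uniq (x :: s) & active e Z x s].

Definition dseparated e Z x y : Prop := ~ dconnected e Z x y.

Definition remove_edge e (A Y : V) : rel V :=
  fun u v => e u v && ~~ ((u == A) && (v == Y)).

(* Valid adjustment set (graphical characterization given in the context). *)
Definition valid_adjustment e (A Y : V) Z : Prop :=
  Z \subset ~: [set A; Y] /\ dseparated (remove_edge e A Y) Z A Y.

Definition K_irreducible e (A Y : V) K Z : Prop :=
  valid_adjustment e A Y Z /\ K \subset Z /\
  ~ (exists Z' : {set V}, Z' \proper Z /\ K \subset Z' /\ valid_adjustment e A Y Z').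

Definition extended_confounding e (A Y : V) (v : V) : Prop :=
  v \in ~: [set A; Y] /\
  (exists K : {set V}, K \subset ~: [set A; Y] /\ dconnected (remove_edge e A Y) K v A) /\
  (exists L : {set V}, L \subset ~: [set A; Y] /\ dconnected (remove_edge e A Y) L v Y).

End Graphs.

(* Main.v *)
Require Import Defs.
From mathcomp Require Import all_boot.
From Stdlib Require Import Classical.
Set Implicit Arguments. Unset Strict Implicit. Unset Printing Implicit Defensive.

Section Aux.
Variable V : finType.
Implicit Types (f : rel V) (Z : {set V}).

Lemma at_suffix f Z x a t : active_triples f Z x a t -> active f Z a t.
Proof. by case: t => [|b t] //= /andP[]. Qed.

Lemma active_suffix f Z x s1 s2 :
  active f Z x (s1 ++ s2) -> active f Z (last x s1) s2.
Proof. elim: s1 x => [|a s1 IH] x //= H; apply: IH; exact: at_suffix H. Qed.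

Lemma at_prefix f Z x a s1 s2 :
  active_triples f Z x a (s1 ++ s2) -> active_triples f Z x a s1.
Proof.
elim: s1 x a => [|b s1 IH] x a //= /andP[-> H] /=; exact: IH H.
Qed.

Lemma active_prefix f Z x s1 s2 : active f Z x (s1 ++ s2) -> active f Z x s1.
Proof. case: s1 => [|a s1] //=; exact: at_prefix. Qed.

Lemma open_sym f Z u w v : open_at f Z u w v = open_at f Z v w u.
Proof. by rewrite /open_at andbC. Qed.

Lemma at_rcons f Z u w s c : active_triples f Z u w (rcons s c) =
  active_triples f Z u w s && open_at f Z (last u (belast w s)) (last w s) c.
Proof.
elim: s u w => [|v s IH] u w /=; first by rewrite andbT.
by rewrite IH andbA.
Qed.

Lemma at_rev f Z u w s v : active_triples f Z u w (rcons s v) ->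
  active_triples f Z v (last w s) (rcons (rev (belast w s)) u).
Proof.
elim/last_ind: s v => [|s x IH] v /=.
  by rewrite !andbT open_sym.
rewrite at_rcons belast_rcons last_rcons /= => /andP[H1 H2].
rewrite [w :: s]lastI rev_rcons /= open_sym H2 /=.
exact: IH H1.
Qed.

Lemma active_rev f Z x p z :
  active f Z x (rcons p z) -> active f Z z (rcons (rev p) x).
Proof.
case: p => [|w p] //= /at_rev.
by rewrite [w :: p]lastI rev_rcons /=.
Qed.

Lemma at_mono f Z z u w s : z \notin w :: s ->
  active_triples f (Z :\ z) u w s -> active_triples f Z u w s.
Proof.
elim: s u w => [|v s IH] u w //=.
rewrite in_cons negb_or => /andP[zw zvs] /andP[H1 H2].
rewrite (IH _ _ zvs H2) andbT.
move: H1; rewrite /open_at; case: ifP => _.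
  case/existsP=> y /andP[yZ yc]; apply/existsP; exists y; rewrite yc andbT.
  by move: yZ; rewrite !inE => /andP[_ ->].
rewrite !inE negb_and negbK => /orP[/eqP wz|->//].
by rewrite wz eqxx in zw.
Qed.

Lemma active_mono f Z z x s : z \notin s ->
  active f (Z :\ z) x s -> active f Z x s.
Proof. case: s => [|w s] //=; exact: at_mono. Qed.

Lemma adj_sym f u v : adj f u v = adj f v u.
Proof. by rewrite /adj orbC. Qed.

Lemma exists_min (P : {set V} -> Prop) Z0 : P Z0 ->
  exists Z, P Z /\ ~ (exists Z', Z' \proper Z /\ P Z').
Proof.
move: {2}#|Z0| (leqnn #|Z0|) => n; elim: n Z0 => [|n IH] Z0 Hn HP.
  exists Z0; split=> //; case=> Z' [/proper_card H _].
  by have := leq_trans H Hn.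
case: (classic (exists Z', Z' \proper Z0 /\ P Z')) => [[Z' [HZ' PZ']]|H];
  last by exists Z0.
apply: (IH Z') => //; rewrite -ltnS; exact: leq_trans (proper_card HZ') Hn.
Qed.

Lemma W_valid e (A Y : V) : acyclic e -> A != Y -> e A Y ->
  (forall v : V, v != A -> v != Y -> ~~ connect e A v) ->
  dseparated (remove_edge e A Y) (~: [set A; Y]) A Y.
Proof.
move=> acyc AY eAY nodesc [_ [_ [s [Hp Hl Hu Ha]]]].
case: s Hp Hl Hu Ha => [|w s] /=.
  by move=> _ Hl; rewrite Hl eqxx in AY.
case: s => [|v s] /=.
  move=> Hp Hl; subst w; move: Hp; rewrite /adj /remove_edge !eqxx /= andbF /=.
  rewrite andbT eq_sym (negbTE AY) /= andbT => eYA.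
  by have := acyc _ _ eAY; rewrite (connect1 eYA).
move=> Hp Hl /andP[HA /andP[Hw _]] /andP[Ho _].
have wA : w != A by move: HA; rewrite in_cons negb_or eq_sym => /andP[].
have wY : w != Y by rewrite -Hl; apply: contraNneq Hw => ->; exact: mem_last.
move: Ho; rewrite /open_at /remove_edge.
have -> : e A w = false.
  apply/negbTE/negP => eAw; have := nodesc w wA wY; by rewrite (connect1 eAw).
by rewrite /= !inE negbK (negbTE wA) (negbTE wY).
Qed.

End Aux.

Theorem mainTheorem4 (V : finType) (e : rel V) (A Y : V) (K : {set V}) :
  acyclic e ->
  A != Y ->
  e A Y ->
  (forall v : V, v != A -> v != Y -> ~~ connect e A v) ->
  K \subset ~: [set A; Y] ->
  exists Z : {set V},
    Z \subset ~: [set A; Y] /\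
    K_irreducible e A Y K (K :|: Z) /\
    (forall z, z \in Z -> extended_confounding e A Y z).
Proof.
move=> acyc AY eAY nodesc KW.
have [Zm [[KZm [ZmW Zsep]] Hmin]] :=
  @exists_min V (fun Z : {set V} => K \subset Z /\ valid_adjustment e A Y Z) _
    (conj KW (conj (subxx _) (W_valid acyc AY eAY nodesc))).
exists (Zm :\: K); split; first exact: subset_trans (subsetDl _ _) ZmW.
have -> : K :|: Zm :\: K = Zm by rewrite -{1}(setIidPr KZm) setID.
 split; first by split=> //; split.
move=> z; rewrite inE => /andP[zK zZm].
have zW : z \in ~: [set A; Y] := subsetP ZmW z zZm.
have Aout : A \notin Zm by apply/negP => /(subsetP ZmW); rewrite !inE eqxx.
have Yout : Y \notin Zm by apply/negP => /(subsetP ZmW); rewrite !inE eqxx orbT.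
have Z1W : Zm :\ z \subset ~: [set A; Y] by exact: subset_trans (subsetDl _ _) ZmW.
have hconn : dconnected (remove_edge e A Y) (Zm :\ z) A Y.
  apply: NNPP => Hd; apply: Hmin; exists (Zm :\ z); split; first exact: properD1.
  split; last by split.
  apply/subsetP => x xK; rewrite !inE (subsetP KZm x xK) andbT.
  by apply/eqP => xz; subst x; rewrite xK in zK.
case: hconn => _ [_ [s [Hp Hl Hu Ha]]].
have zs : z \in s.
  apply: contraT => zns; exfalso; apply: Zsep; split; first exact Aout.
  split; first exact Yout.
  exists s; split => //; exact: active_mono zns Ha.
case/splitPr: zs Hp Hl Hu Ha => p1 p2 Hp Hl Hu Ha.
have zout : z \notin Zm :\ z by rewrite !inE eqxx.
split; first exact zW.
split.
  exists (Zm :\ z); split=> //; split=> //; split; first by rewrite !inE (negbTE Aout) andbF.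
  exists (rcons (rev p1) A); split.
  - move: Hp; rewrite -cat_rcons cat_path => /andP[H1 _].
    have Hsym : (fun x y => adj (remove_edge e A Y) y x) =2 adj (remove_edge e A Y).
      by move=> ? ?; exact: adj_sym.
    rewrite -(eq_path Hsym) -rev_path last_rcons belast_rcons rev_cons in H1.
    exact H1.
  - by rewrite last_rcons.
  - move: Hu; rewrite -cat_rcons -cat_cons cat_uniq => /and3P[H _ _].
    by move: H; rewrite -rev_uniq rev_cons rev_rcons rcons_cons.
  - move: Ha; rewrite -cat_rcons => /active_prefix; exact: active_rev.
exists (Zm :\ z); split=> //; split=> //; split; first by rewrite !inE (negbTE Yout) andbF.
exists p2; split.
- by move: Hp; rewrite cat_path => /andP[_ /= /andP[_ ->]].
- by rewrite last_cat in Hl.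
- by move: Hu; rewrite -cat_cons cat_uniq => /and3P[_ _].
- by move: Ha; rewrite -cat_rcons => /active_suffix; rewrite last_rcons.
Qed.
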